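(* Let $(Q,\star,e)$ be a double Ward quasigroup. Define $x\bullet y=(e\star x)\star y$. Then $(Q,\bullet)$ is a Ward quasigroup, i.e. a quasigroup satisfying $(x\bullet z)\bullet(y\bullet z)=x\bullet y$ for all $x,y,z\in Q$.
   Context: A quasigroup is a magma in which $ax=b$ and $ya=b$ have unique solutions for all $a,b$. A double Ward quasigroup $(Q,\star,e)$ is a quasigroup $(Q,\star)$ with an element $e$ such that $((e\star e)\star(x\star z))\star((e\star y)\star z)=x\star y$ for all $x,y,z\in Q$. *)

(* Defs.v *)
Definition is_quasigroup {Q : Type} (op : Q -> Q -> Q) : Prop :=
  (forall a b : Q, exists x : Q, op a x = b /\ forall x' : Q, op a x' = b -> x' = x) /\
  (forall a b : Q, exists y : Q, op y a = b /\ forall y' : Q, op y' a = b -> y' = y).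

Definition is_double_ward_quasigroup {Q : Type} (star : Q -> Q -> Q) (e : Q) : Prop :=
  is_quasigroup star /\
  forall x y z : Q,
    star (star (star e e) (star x z)) (star (star e y) z) = star x y.

Definition is_ward_quasigroup {Q : Type} (op : Q -> Q -> Q) : Prop :=
  is_quasigroup op /\
  forall x y z : Q, op (op x z) (op y z) = op x y.

(* Main.v *)
Require Import Defs.

Theorem proposition4p3 (Q : Type) (star : Q -> Q -> Q) (e : Q) :
  is_double_ward_quasigroup star e ->
  is_ward_quasigroup (fun x y => star (star e x) y).
Proof.
  intros [[HL HR] DW].
  assert (A : forall y w, star (star (star e e) w) w = star (star e y) y).
  { intros y w. destruct (HL (star e y) w) as [z [Hz _]].
    rewrite <- Hz. apply DW. }
  assert (Hf : star e e = e).
  { assert (RC : forall a b s, star a s = star b s -> a = b).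
    { intros a b s Hab. destruct (HR s (star b s)) as [y0 [_ U]].
      transitivity y0; [apply U; exact Hab | symmetry; apply U; reflexivity]. }
    pose proof (A e e) as H. apply RC in H. apply RC in H. exact H. }
  rewrite Hf in DW.
  split; [split|].
  - intros a b. destruct (HL (star e a) b) as [x [Hx U]].
    exists x. split; [exact Hx|]. intros x' H'. apply U. exact H'.
  - intros a b. destruct (HR a b) as [v [Hv Uv]].
    destruct (HL e v) as [y [Hy Uy]].
    exists y. split.
    + rewrite Hy. exact Hv.
    + intros y' H'. apply Uy. apply Uv. exact H'.
  - intros x y z. simpl. apply DW.
Qed.
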